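(* Let $\overrightarrow{W}$ and $\overrightarrow{W}'$ be two Morse sequences on the same simplicial complex $K$, with reference maps $\curlywedge,\curlywedge'$ and coreference maps $\curlyvee,\curlyvee'$ respectively. If $\overrightarrow{W}$ and $\overrightarrow{W}'$ are equivalent, then $\curlywedge=\curlywedge'$ and $\curlyvee=\curlyvee'$.
   Context: A simplicial complex $K$ is a finite collection of non-empty finite sets closed under taking non-empty subsets; $\dim\sigma=|\sigma|-1$, $K^{(p)}$ the set of $p$-simplices. A pair $(\sigma,\tau)$ with $\sigma\subsetneq\tau$ is a free pair for $K$ if $\tau$ is the only simplex other than $\sigma$ containing $\sigma$; $K$ is then an elementary expansion of $K\setminus\{\sigma,\tau\}$. If $\nu$ is a facet (maximal simplex) of $K$, $K$ is an elementary filling of $K\setminus\{\nu\}$. A Morse sequence on $K$ is a sequence $\langle\emptyset=K_0,\dots,K_k=K\rangle$ with each $K_i$ an elementary expansion or filling of $K_{i-1}$; simplices added by fillings are critical; for an expansion $K_i=K_{i-1}\cup\{\sigma,\tau\}$, $\sigma\subset\tau$, $(\sigma,\tau)$ is a regular pair, $\sigma$ lower regular, $\tau$ upper regular. The gradient vector field of a Morse sequence is the set of its regular pairs; two Morse sequences on $K$ are equivalent if they have the same gradient vector field. $K[p]$ is the $\mathbb{Z}_2$-vector space of subsets of $K^{(p)}$ (sum = symmetric difference, $0=\emptyset$); $\partial(\sigma)=\{\tau\in K^{(p-1)}:\tau\subset\sigma\}$, $\delta(\sigma)=\{\tau\in K^{(p+1)}:\sigma\subset\tau\}$. The reference map $\curlywedge$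 of a Morse sequence is the unique map assigning to each $p$-simplex a set of critical $p$-simplices, extended linearly (mod 2) to chains, with $\curlywedge(\nu)=\{\nu\}$ for critical $\nu$ and $\curlywedge(\tau)=0=\curlywedge(\partial(\tau))$ for upper regular $\tau$; the coreference map $\curlyvee$ is the unique such map with $\curlyvee(\nu)=\{\nu\}$ for critical $\nu$ and $\curlyvee(\sigma)=0=\curlyvee(\delta(\sigma))$ for lower regular $\sigma$. *)

(* Defs.v *)
From mathcomp Require Import all_boot.
Set Implicit Arguments. Unset Strict Implicit. Unset Printing Implicit Defensive.

Section Morse.
Variable V : finType.

(* A simplex is a nonempty finite set of vertices; dim s = #|s| - 1. *)
Definition is_complex (K : {set {set V}}) : Prop :=
  set0 \notin K /\
  forall s t : {set V}, s \in K -> t \subset s -> t != set0 -> t \in K.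

Inductive step : Type :=
| Fill of {set V}
| Expand of {set V} & {set V}.

Definition added (st : step) : {set {set V}} :=
  match st with
  | Fill nu => [set nu]
  | Expand s t => [set s; t]
  end.

Definition step_ok (L : {set {set V}}) (st : step) : Prop :=
  match st with
  | Fill nu =>
      let L' := nu |: L in
      is_complex L' /\ nu \notin L /\
      (forall u : {set V}, u \in L' -> nu \subset u -> u = nu)
  | Expand s t =>
      let L' := s |: (t |: L) in
      is_complex L' /\ s \notin L /\ t \notin L /\ s \proper t /\
      (forall u : {set V}, u \in L' -> s \subset u -> u = s \/ u = t)
  end.

Fixpoint valid_from (L : {set {set V}}) (w : seq step) : Prop :=
  match w with
  | [::] => True
  | st :: w' => step_ok L st /\ valid_from (L :|: added st) w'
  end.

Fixpoint build_from (L : {set {set V}}) (w : seq step) : {set {set V}} :=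
  match w with
  | [::] => L
  | st :: w' => build_from (L :|: added st) w'
  end.

Definition is_morse_seq (K : {set {set V}}) (w : seq step) : Prop :=
  valid_from set0 w /\ build_from set0 w = K.

Definition pairs (w : seq step) : seq ({set V} * {set V}) :=
  pmap (fun st => if st is Expand s t then Some (s, t) else None) w.
Definition fills (w : seq step) : seq {set V} :=
  pmap (fun st => if st is Fill nu then Some nu else None) w.

Definition gvf (w : seq step) : {set {set V} * {set V}} := [set p in pairs w].
Definition crit (w : seq step) : {set {set V}} := [set nu in fills w].
Definition lower_reg (w : seq step) : {set {set V}} := [set p.1 | p in gvf w].
Definition upper_reg (w : seq step) : {set {set V}} := [set p.2 | p in gvf w].

(* K^(p) restricted to simplices with #|s| = n *)
Definition skel (K : {set {set V}}) (n : nat) : {set {set V}} :=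
  [set s in K | #|s| == n].
(* boundary and coboundary (as Z_2-chains, i.e. sets of simplices) *)
Definition bd (K : {set {set V}}) (s : {set V}) : {set {set V}} :=
  [set t in K | (t \subset s) && (#|t| == #|s|.-1)].
Definition cbd (K : {set {set V}}) (s : {set V}) : {set {set V}} :=
  [set t in K | (s \subset t) && (#|t| == #|s|.+1)].

(* mod-2 linear extension of a map on simplices to chains *)
Definition ext (f : {set V} -> {set {set V}}) (c : {set {set V}}) : {set {set V}} :=
  [set x | odd #|[set s in c | x \in f s]|].

Definition is_reference (K : {set {set V}}) (w : seq step)
  (f : {set V} -> {set {set V}}) : Prop :=
  (forall s : {set V}, s \in K -> f s \subset skel (crit w) #|s|) /\
  (forall nu, nu \in crit w -> f nu = [set nu]) /\
  (forall tau, tau \in upper_reg w -> f tau = set0 /\ ext f (bd K tau) = set0).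

Definition is_coreference (K : {set {set V}}) (w : seq step)
  (g : {set V} -> {set {set V}}) : Prop :=
  (forall s : {set V}, s \in K -> g s \subset skel (crit w) #|s|) /\
  (forall nu, nu \in crit w -> g nu = [set nu]) /\
  (forall sg, sg \in lower_reg w -> g sg = set0 /\ ext g (cbd K sg) = set0).

End Morse.

(* Main.v *)
Require Import Defs.
From mathcomp Require Import all_boot.
From mathcomp Require Import zify.
Set Implicit Arguments. Unset Strict Implicit. Unset Printing Implicit Defensive.

From HB Require Import structures.

Definition step_enc (V : finType) (st : step V) : {set V} + ({set V} * {set V}) :=
  match st with Fill nu => inl nu | Expand s t => inr (s, t) end.
Definition step_dec (V : finType) (x : {set V} + ({set V} * {set V})) : step V :=
  match x with inl nu => Fill nu | inr (s, t) => Expand s t end.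
Lemma step_encK (V : finType) : cancel (@step_enc V) (@step_dec V).
Proof. by case. Qed.
HB.instance Definition _ (V : finType) := Equality.copy (step V) (can_type (@step_encK V)).

Section P.
Variable V : finType.
Implicit Types (L K : {set {set V}}) (w : seq (step V)).

Lemma build_sub L w : L \subset build_from L w.
Proof.
elim: w L => [|st w IH] L /=; first exact: subxx.
exact: subset_trans (subsetUl _ _) (IH _).
Qed.

Lemma build_mem L w x : x \in build_from L w ->
  x \in L \/ exists2 st : step V, st \in w & x \in added st.
Proof.
elim: w L => [|st w IH] L /=; first by left.
move=> /IH [|[st' H1 H2]].
  rewrite inE => /orP [->|H]; first by left.
  by right; exists st; rewrite ?inE ?eqxx.
by right; exists st'; rewrite // inE H1 orbT.
Qed.

Lemma valid_notin L w st x : valid_from L w -> st \in w -> x \in added st -> x \notin L.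
Proof.
elim: w L => [|st0 w IH] L //= [Hok Hv].
rewrite inE => /orP [/eqP Est|Hin] Hx.
  rewrite Est in Hx.
  case: st0 Hok Hx {Est Hv} => [nu|s t] /=.
    by move=> [_ [Hn _]]; rewrite inE => /eqP ->.
  by move=> [_ [Hs [Ht _]]]; rewrite !inE => /orP [] /eqP ->.
have := IH _ Hv Hin Hx. by rewrite inE negb_or => /andP [].
Qed.

Lemma valid_uniq L w st1 st2 x : valid_from L w -> st1 \in w -> st2 \in w ->
  x \in added st1 -> x \in added st2 -> st1 = st2.
Proof.
elim: w L => [|st0 w IH] L //= [Hok Hv].
rewrite !inE => /orP [/eqP E1|H1] /orP [/eqP E2|H2] Hx1 Hx2; rewrite ?E1 ?E2 //.
- rewrite E1 in Hx1. have := valid_notin Hv H2 Hx2. rewrite inE Hx1 orbT. by [].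
- rewrite E2 in Hx2. have := valid_notin Hv H1 Hx1. rewrite inE Hx2 orbT. by [].
- exact: IH Hv H1 H2 Hx1 Hx2.
Qed.

Lemma crit_fill w nu : (nu \in crit w) = (Fill nu \in w).
Proof.
rewrite /crit inE /fills mem_pmap.
apply/mapP/idP => [[st Hst Heq]|H]; last by exists (Fill nu).
by case: st Hst Heq => //= nu' Hst [->].
Qed.

Lemma gvf_exp w s t : ((s, t) \in gvf w) = (Expand s t \in w).
Proof.
rewrite /gvf inE /pairs mem_pmap.
apply/mapP/idP => [[st Hst Heq]|H]; last by exists (Expand s t).
by case: st Hst Heq => //= s' t' Hst [-> ->].
Qed.

Lemma cplx_n0 L x : is_complex L -> x \in L -> x != set0.
Proof. by move=> [H0 _] xL; apply/eqP => e; move: H0; rewrite -e xL. Qed.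

Lemma free_face L' s t : is_complex L' -> s \in L' -> t \in L' -> s \proper t ->
  (forall u, u \in L' -> s \subset u -> u = s \/ u = t) ->
  #|t| = #|s|.+1.
Proof.
move=> Hc Hs Ht /properP [sst [v vt vs]] Hfree.
have ssu : s \subset t :\ v.
  apply/subsetP => x xs; rewrite !inE (subsetP sst _ xs) andbT.
  by apply/eqP => exv; move: vs; rewrite -exv xs.
have sn0 := cplx_n0 Hc Hs.
have un0 : t :\ v != set0.
  apply/set0Pn; case/set0Pn: sn0 => y ys; exists y; exact: (subsetP ssu).
have uL : t :\ v \in L' := Hc.2 _ _ Ht (subsetDl _ _) un0.
case: (Hfree _ uL ssu) => e.
  by rewrite (cardsD1 v t) vt e.
have : v \in t :\ v by rewrite e.
by rewrite !inE eqxx.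
Qed.

Lemma ext_split (f : {set V} -> {set {set V}}) (c : {set {set V}}) (s x : {set V}) : s \notin c ->
  (x \in ext f (s |: c)) = (x \in f s) (+) (x \in ext f c).
Proof.
move=> sc; rewrite /ext !inE.
case Hs: (x \in f s).
- have -> : [set u in s |: c | x \in f u] = s |: [set u in c | x \in f u].
    apply/setP => u; rewrite !inE; case: eqP => [->|_] /=; by rewrite ?Hs.
  by rewrite cardsU1 inE (negbTE sc) /= oddD.
- have -> : [set u in s |: c | x \in f u] = [set u in c | x \in f u].
    apply/setP => u; rewrite !inE; case: eqP => [->|_] /=; by rewrite ?Hs ?andbF.
  by [].
Qed.

Lemma ext_eq (f f' : {set V} -> {set {set V}}) (c : {set {set V}}) : {in c, f =1 f'} -> ext f c = ext f' c.
Proof.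
move=> H; apply/setP => x; rewrite /ext !inE.
congr (odd _); apply: eq_card => u; rewrite !inE.
by case uc: (u \in c) => //=; rewrite (H _ uc).
Qed.

Lemma xorb_lem (a b o : bool) : a (+) o = false -> b (+) o = false -> a = b.
Proof. by case: a; case: b; case: o. Qed.

Lemma ext_solve (f f' : {set V} -> {set {set V}}) (c : {set {set V}}) (s : {set V}) : s \in c ->
  ext f c = set0 -> ext f' c = set0 ->
  {in c :\ s, f =1 f'} -> f s = f' s.
Proof.
move=> sc H H' Heq.
have Hc : c = s |: (c :\ s) by rewrite setD1K.
have sn : s \notin c :\ s by rewrite !inE eqxx.
rewrite Hc in H H'.
apply/setP => x.
have h1 : (x \in ext f (s |: c :\ s)) = (x \in set0) by rewrite H.
have h2 : (x \in ext f' (s |: c :\ s)) = (x \in set0) by rewrite H'.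
move: h1 h2; rewrite !ext_split // (ext_eq Heq) inE.
rewrite in_set0; move=> h1 h2; apply: (xorb_lem h1 h2).
Qed.

Lemma fill_crit K w w' nu : valid_from set0 w -> build_from set0 w' = K ->
  gvf w = gvf w' -> Fill nu \in w -> nu \in K -> nu \in crit w'.
Proof.
move=> Vw Bw' Hg stw; rewrite -Bw' => /build_mem [|[st' st'w' Hst']]; first by rewrite inE.
case: st' st'w' Hst' => [nu'|a b] /= st'w'.
  by rewrite inE => /eqP ->; rewrite crit_fill.
move=> Hab.
have abw : Expand a b \in w by rewrite -gvf_exp Hg gvf_exp.
by have := valid_uniq Vw stw abw (set11 nu) Hab.
Qed.

Lemma setE2 L s t : s |: (t |: L) = L :|: [set s; t].
Proof.
apply/setP => x; rewrite !inE.
by case: (x == s); case: (x == t); case: (x \in L).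
Qed.

Lemma ref_ind K w w' (f f' : {set V} -> {set {set V}}) :
  valid_from set0 w -> valid_from set0 w' -> build_from set0 w' = K ->
  is_reference K w f -> is_reference K w' f' -> gvf w = gvf w' ->
  forall L w0, valid_from L w0 -> {subset w0 <= w} -> build_from L w0 = K ->
  {in L, f =1 f'} -> {in K, f =1 f'}.
Proof.
move=> Vw Vw' Bw' [_ [Cf Uf]] [_ [Cf' Uf']] Hg L w0.
elim: w0 L => [|st w0 IH] L /=; first by move=> _ _ <-.
move=> [Hok Hv] Hsub HB Heq.
have sub0 : {subset w0 <= w} by move=> x xw0; apply: Hsub; rewrite inE xw0 orbT.
apply: (IH _ Hv sub0 HB).
have stw : st \in w by apply: Hsub; rewrite inE eqxx.
have LK : L :|: added st \subset K by rewrite -HB; exact: build_sub.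
case: st Hok stw LK {Hv Hsub HB IH} => [nu|s t] /=.
- move=> [Hc [nuL Hmax]] stw LK x.
  rewrite inE => /orP [xL|]; first exact: Heq.
  rewrite inE => /eqP ->.
  have nuK : nu \in K by apply: (subsetP LK); rewrite !inE eqxx orbT.
  have nucw : nu \in crit w by rewrite crit_fill.
  have nucw' := fill_crit Vw Bw' Hg stw nuK.
  by rewrite (Cf _ nucw) (Cf' _ nucw').
- move=> [Hc [sL [tL [sst Hfree]]]] stw LK.
  rewrite setE2 in Hc Hfree.
  have sL' : s \in L :|: [set s; t] by rewrite !inE eqxx orbT.
  have tL' : t \in L :|: [set s; t] by rewrite !inE eqxx !orbT.
  have Hcard := free_face Hc sL' tL' sst Hfree.
  have sK : s \in K by apply: (subsetP LK).
  have sgw' : (s, t) \in gvf w' by rewrite -Hg gvf_exp.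
  have tup : t \in upper_reg w by apply/imsetP; exists (s, t); rewrite ?gvf_exp.
  have tup' : t \in upper_reg w' by apply/imsetP; exists (s, t).
  case: (Uf _ tup) => ft0 ef. case: (Uf' _ tup') => ft0' ef'.
  have sbd : s \in bd K t by rewrite inE sK (proper_sub sst) Hcard /= eqxx.
  have sn0 := cplx_n0 Hc sL'.
  have fs : f s = f' s.
    apply: (ext_solve sbd ef ef') => u.
    rewrite !inE => /andP [us /andP [uK /andP [ut /eqP uc]]].
    apply: Heq.
    have un0 : u != set0.
      by rewrite -card_gt0 uc Hcard /= card_gt0.
    have uL' : u \in L :|: [set s; t] := Hc.2 _ _ tL' ut un0.
    move: uL'; rewrite !inE (negbTE us) /=.
    case/orP => // /eqP e.
    have ut' : #|u| = #|t| by rewrite e.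
    clear -uc ut' Hcard; lia.
  move=> x; rewrite !inE => /orP [/Heq //|/orP [] /eqP ->]; first exact: fs.
  by rewrite ft0 ft0'.
Qed.

Lemma coref_ind K w w' (g g' : {set V} -> {set {set V}}) :
  valid_from set0 w -> valid_from set0 w' -> build_from set0 w' = K ->
  is_coreference K w g -> is_coreference K w' g' -> gvf w = gvf w' ->
  forall L w0, valid_from L w0 -> {subset w0 <= w} -> build_from L w0 = K ->
  forall x, x \in K -> x \notin L -> g x = g' x.
Proof.
move=> Vw Vw' Bw' [_ [Cf Uf]] [_ [Cf' Uf']] Hg L w0.
elim: w0 L => [|st w0 IH] L /=; first by move=> _ _ <- x ->.
move=> [Hok Hv] Hsub HB x xK xL.
have sub0 : {subset w0 <= w} by move=> y yw0; apply: Hsub; rewrite inE yw0 orbT.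
have IH' := IH _ Hv sub0 HB.
case xL': (x \in L :|: added st); last exact: IH' _ xK (negbT xL').
move: xL'; rewrite inE (negbTE xL) /= => xst.
have stw : st \in w by apply: Hsub; rewrite inE eqxx.
have LK : L :|: added st \subset K by rewrite -HB; exact: build_sub.
case: st Hok stw LK IH' xst {Hv Hsub HB IH} => [nu|s t] /=.
- move=> [Hc [nuL Hmax]] stw LK IH'.
  rewrite inE => /eqP ->.
  have nuK : nu \in K by apply: (subsetP LK); rewrite !inE eqxx orbT.
  have nucw : nu \in crit w by rewrite crit_fill.
  have nucw' := fill_crit Vw Bw' Hg stw nuK.
  by rewrite (Cf _ nucw) (Cf' _ nucw').
- move=> [Hc [sL [tL [sst Hfree]]]] stw LK IH'.
  rewrite setE2 in Hc Hfree.
  have sL' : s \in L :|: [set s; t] by rewrite !inE eqxx orbT.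
  have tL' : t \in L :|: [set s; t] by rewrite !inE eqxx !orbT.
  have Hcard := free_face Hc sL' tL' sst Hfree.
  have tK : t \in K by apply: (subsetP LK).
  have sgw' : (s, t) \in gvf w' by rewrite -Hg gvf_exp.
  have slo : s \in lower_reg w by apply/imsetP; exists (s, t); rewrite ?gvf_exp.
  have slo' : s \in lower_reg w' by apply/imsetP; exists (s, t).
  case: (Uf _ slo) => gs0 eg. case: (Uf' _ slo') => gs0' eg'.
  have tcbd : t \in cbd K s by rewrite inE tK (proper_sub sst) Hcard /= eqxx.
  have gt : g t = g' t.
    apply: (ext_solve tcbd eg eg') => u.
    rewrite !inE => /andP [ut /andP [uK /andP [su /eqP uc]]].
    apply: IH' => //.
    apply/negP => uL'.
    case: (Hfree _ uL' su) => e.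
      have us' : #|u| = #|s| by rewrite e.
      clear -uc us'; lia.
    by move: ut; rewrite e eqxx.
  rewrite !inE => /orP [] /eqP ->; first by rewrite gs0 gs0'.
  exact: gt.
Qed.

End P.

Theorem proposition3 (V : finType) (K : {set {set V}}) (w w' : seq (step V))
  (f f' g g' : {set V} -> {set {set V}}) :
  is_complex K ->
  is_morse_seq K w -> is_morse_seq K w' ->
  is_reference K w f -> is_reference K w' f' ->
  is_coreference K w g -> is_coreference K w' g' ->
  gvf w = gvf w' ->
  (forall s, s \in K -> f s = f' s) /\ (forall s, s \in K -> g s = g' s).
Proof.
move=> _ [Vw Bw] [Vw' Bw'] Rf Rf' Rg Rg' Hg; split.
- move=> s sK.
  apply: (ref_ind Vw Vw' Bw' Rf Rf' Hg Vw (fun x h => h) Bw) => //.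
  by move=> x; rewrite inE.
- move=> s sK.
  by apply: (coref_ind Vw Vw' Bw' Rg Rg' Hg Vw (fun x h => h) Bw); rewrite ?inE.
Qed.
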